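(* Let $\ell<t$ be positive integers and $n\ge 2t+2$. Then $\lambda(C_{2t+1}(T_{n-2t,2}))<\lambda(C_{2\ell+1}(T_{n-2\ell,2}))$.
   Context: $\lambda(G)$ denotes the spectral radius of the adjacency matrix of $G$. $T_{m,2}$ is the complete bipartite graph on $m$ vertices with parts of sizes $\lfloor m/2\rfloor$ and $\lceil m/2\rceil$. For $s\ge1$, $C_{2s+1}(T_{n-2s,2})$ is the $n$-vertex graph obtained by identifying one vertex of a cycle $C_{2s+1}$ with one vertex of $T_{n-2s,2}$ lying in the part of size $\lfloor (n-2s)/2\rfloor$. *)

(* Defs.v *)
From mathcomp Require Import all_boot all_order all_algebra all_field.
Set Implicit Arguments. Unset Strict Implicit. Unset Printing Implicit Defensive.
Import Order.TTheory GRing.Theory Num.Theory.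
Local Open Scope ring_scope.

Definition adjmx (n : nat) (e : rel 'I_n) : 'M[algC]_n :=
  \matrix_(i, j) (e i j)%:R.

(* The multiset of (complex) eigenvalues of a square matrix: the roots of its
   characteristic polynomial, listed with multiplicity. *)
Definition eigs (n : nat) (A : 'M[algC]_n) : seq algC :=
  sval (closed_field_poly_normal (char_poly A)).

(* Spectral radius: maximum modulus of an eigenvalue (0 for the empty matrix). *)
Definition spectral_radius (n : nat) (A : 'M[algC]_n) : algC :=
  \big[Num.max/0]_(z <- eigs A) `|z|.

Definition lambda (n : nat) (e : rel 'I_n) : algC := spectral_radius (adjmx e).

(* Let m := n - 2s. Vertices 0..m-1 form T_{m,2}, with part
   A = {0, .., m./2 - 1} (size floor(m/2)) and B = {m./2, .., m-1}
   (size ceil(m/2)).  Vertices m, .., m+2s-1 are the new cycle vertices;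
   the cycle C_{2s+1} is 0, m, m+1, .., m+2s-1, 0, so the vertex 0 (which lies
   in the part of size floor(m/2)) is the identified vertex. *)
Local Open Scope nat_scope.
Definition in_cycle (n s : nat) (v : 'I_n) : bool := (v == 0 :> nat) || (n - 2 * s <= v).
Definition cyc_pos (n s : nat) (v : 'I_n) : nat :=
  if v == 0 :> nat then 0 else (v - (n - 2 * s)).+1.

Definition CT_edge (n s : nat) : rel 'I_n := fun u v =>
  let m := n - 2 * s in
  [&& (u < m)%N, (v < m)%N & ((u < m./2)%N != (v < m./2)%N)]
  || [&& in_cycle s u, in_cycle s v &
        (((cyc_pos s u).+1 %% (2 * s).+1 == cyc_pos s v)
         || ((cyc_pos s v).+1 %% (2 * s).+1 == cyc_pos s u))].
Arguments CT_edge n s : clear implicits.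

(* Main.v *)
Require Import Defs.
From mathcomp Require Import all_boot all_order all_algebra all_field.
From mathcomp Require Import zify ring lra.
Import Order.TTheory GRing.Theory Num.Theory.
Local Open Scope ring_scope.

Module Part0.
Local Open Scope ring_scope.
Local Open Scope sesquilinear_scope.

Lemma eigs_root n (A : 'M[algC]_n) z : (z \in eigs A) = root (char_poly A) z.
Proof.
rewrite /eigs; case: closed_field_poly_normal => r /= Hr.
by rewrite [in RHS]Hr (monicP (char_poly_monic A)) scale1r root_prod_XsubC.
Qed.
Lemma max_ge0 (r : seq algC) : 0 <= \big[Num.max/0]_(z <- r) `|z|.
Proof.
elim: r => [|x r IH]; rewrite ?big_nil ?big_cons //.
rewrite maxElt; case: ifP => //.
Qed.

Lemma le_srad n (A : 'M[algC]_n) z : z \in eigs A -> `|z| <= spectral_radius A.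
Proof.
rewrite /spectral_radius; elim: (eigs A) => [|x r IH] //.
rewrite big_cons inE maxElt => /orP [/eqP ->|/IH H]; case: ifP => // H2.
- exact: ltW.
- apply: le_trans H _. have := max_ge0 r. rewrite -/(\big[Num.max/0]_(z <- r) `|z|) => h.
  have rx : `|x| \is Num.real by apply: normr_real.
  have rr : (\big[Num.max/0]_(z <- r) `|z|) \is Num.real by apply: ger0_real.
  move: (real_leVge rx rr) H2; case/orP => // h2.
  by rewrite lt_def h2 andbT => /negbT; rewrite negbK => /eqP ->.
Qed.

Lemma lt_srad n (A : 'M[algC]_n) c : 0 < c ->
  (forall z, z \in eigs A -> `|z| < c) -> spectral_radius A < c.
Proof.
rewrite /spectral_radius => c0; elim: (eigs A) => [|x r IH] H; rewrite ?big_nil ?big_cons //.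
rewrite maxElt; case: ifP => _.
- apply: IH => z hz; apply: H; by rewrite inE hz orbT.
- apply: H; by rewrite inE eqxx.
Qed.

Lemma exists_max (I : finType) (i0 : I) (g : I -> algC) :
  (forall i, g i \is Num.real) -> exists j, forall i, g i <= g j.
Proof.
move=> gr.
suff [j Hj] : exists j, forall i, i \in enum I -> g i <= g j.
  by exists j => i; apply: Hj; rewrite mem_enum.
elim: (enum I) => [|x s [j IH]]; first by exists i0.
case/orP: (real_leVge (gr x) (gr j)) => h.
- exists j => i; rewrite inE => /orP [/eqP ->|/IH] //.
- exists x => i; rewrite inE => /orP [/eqP ->|/IH h2] //.
  exact: le_trans h2 h.
Qed.

Lemma upper_bound n (e : rel 'I_n) (x : 'I_n -> algC) c :
  (forall i j, e i j = e j i) -> (forall i, 0 < x i) ->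
  (forall i, \sum_j (e i j)%:R * x j < c * x i) ->
  forall z, z \in eigs (adjmx e) -> `|z| < c.
Proof.
move=> esym xpos rows z; rewrite eigs_root -eigenvalue_root_char => /eigenvalueP [v vA vn0].
have [i0 vi0] : exists i, v 0 i != 0 by apply/rV0Pn.
pose g i := `|v 0 i| / x i.
have greal : forall i, g i \is Num.real.
  by move=> i; apply: ger0_real; rewrite /g divr_ge0 // ltW.
have [j Hj] := exists_max _ i0 _ greal.
have key : forall i, `|v 0 i| <= g j * x i.
  by move=> i; rewrite -ler_pdivrMr //; exact: Hj.
have vj : 0 < `|v 0 j|.
  rewrite lt_def normr_ge0 andbT normr_eq0; apply: contraNneq vi0 => vj0.
  by rewrite -normr_eq0 eq_le normr_ge0 andbT (le_trans (key i0)) // /g vj0 normr0 mul0r mul0r.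
have E : z * v 0 j = \sum_i v 0 i * (e i j)%:R.
  move/rowP/(_ j): vA; rewrite !mxE => <-.
  by apply: eq_bigr => i _; rewrite mxE.
have gjx : g j * x j = `|v 0 j| by rewrite /g divfK // gt_eqF.
rewrite -(ltr_pM2r vj) -normrM E.
apply: (le_lt_trans (ler_norm_sum _ _ _)).
apply: (@le_lt_trans _ _ (\sum_i g j * x i * (e j i)%:R)).
  apply: ler_sum => i _; rewrite normrM normr_nat esym ler_wpM2r //.
rewrite -gjx mulrCA.
rewrite (eq_bigr (fun i => g j * ((e j i)%:R * x i))); last first.
  by move=> i _; rewrite -mulrA (mulrC (x i)).
have gj0 : 0 < g j by rewrite -(ltr_pM2r (xpos j)) mul0r gjx.
by rewrite -mulr_sumr ltr_pM2l.
Qed.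

Lemma lower_bound n (e : rel 'I_n) (y : 'I_n -> algC) c :
  (forall i j, e i j = e j i) -> 0 <= c -> (forall i, 0 <= y i) -> (exists i, 0 < y i) ->
  (forall i, c * y i <= \sum_j (e i j)%:R * y j) -> c <= spectral_radius (adjmx e).
Proof.
move=> esym c0 ypos [i1 yi1] rows.
set A := adjmx e.
have AC : A ^t* = A.
  by apply/matrixP => i j; rewrite !mxE conjC_nat esym.
have Anorm : A \is normalmx by rewrite qualifE AC.
have Adec := orthomx_spectralP Anorm.
set P := spectralmx A in Adec; set D := spectral_diag A in Adec.
have Pu : P \is unitarymx := spectral_unitarymx A.
have Pun : P \in unitmx := spectral_unit A.
have PiP : invmx P = P ^t* := invmx_unitary Pu.
have PPt : P *m P ^t* = 1%:M by apply/unitarymxP.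
have PtP : P ^t* *m P = 1%:M by rewrite -PiP mulVmx.
have Dle : forall k, `|D 0 k| <= spectral_radius A.
  move=> k; apply: le_srad; rewrite eigs_root -eigenvalue_root_char.
  apply/eigenvalueP; exists (row k P).
    rewrite -row_mul [in LHS]Adec !mulmxA mulmxV // mul1mx.
    apply/rowP => j; rewrite !mxE (bigD1 k) //= big1 ?addr0; first by rewrite mxE eqxx mulr1n.
    by move=> i ik; rewrite mxE eq_sym (negPf ik) mulr0n mul0r.
  apply/negP => /eqP rk0.
  have : row k (P *m P ^t*) = 0 by rewrite row_mul rk0 mul0mx.
  by rewrite PPt => /rowP /(_ k); rewrite !mxE eqxx /= => /eqP; rewrite oner_eq0.
set Y : 'rV_n := \row_i y i.
have yC : forall i, (y i)^* = y i by move=> i; apply: geC0_conj.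
set N := \sum_i y i ^+ 2.
have N0 : 0 < N.
  rewrite /N (bigD1 i1) //= ltr_wpDr ?sumr_ge0 // => [i _|]; first exact: exprn_ge0.
  by rewrite exprn_gt0.
have Q1 : (Y *m A *m Y ^t*) 0 0 = \sum_k (\sum_j (e k j)%:R * y j) * y k.
  rewrite mxE; apply: eq_bigr => k _; rewrite !mxE yC; congr (_ * _).
  by apply: eq_bigr => j _; rewrite !mxE esym mulrC.
set W := Y *m P ^t*.
have WC : W ^t* = P *m Y ^t* by rewrite /W trmx_mul map_mxM trmxCK.
have Q2 : (Y *m A *m Y ^t*) 0 0 = \sum_k W 0 k * D 0 k * (W 0 k)^*.
  rewrite {1}Adec PiP !mulmxA -/W -(mulmxA _ P) -WC mxE.
  apply: eq_bigr => k _; rewrite mul_mx_diag !mxE //.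
have Q3 : \sum_k `|W 0 k| ^+ 2 = N.
  have : (W *m W ^t*) 0 0 = (Y *m Y ^t*) 0 0.
    by rewrite WC /W mulmxA -(mulmxA Y) PtP mulmx1.
  rewrite !mxE => H; rewrite /N; under eq_bigr do rewrite normCK.
  rewrite (eq_bigr (fun k => W 0 k * W ^t* k 0)); last by move=> k _; rewrite !mxE.
  rewrite H; apply: eq_bigr => k _; rewrite !mxE yC expr2 //.
set Q := (Y *m A *m Y ^t*) 0 0.
have cNQ : c * N <= Q.
  rewrite /Q Q1 /N mulr_sumr; apply: ler_sum => k _.
  by rewrite expr2 mulrA ler_wpM2r.
have QN : `|Q| <= spectral_radius A * N.
  rewrite /Q Q2 -Q3 mulr_sumr; apply: (le_trans (ler_norm_sum _ _ _)).
  apply: ler_sum => k _; rewrite mulrAC -normCK normrM normrX normr_id mulrC.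
  by rewrite ler_wpM2r ?exprn_ge0.
have Q0 : 0 <= Q by apply: le_trans cNQ; rewrite mulr_ge0 // ltW.
rewrite -(ler_pM2r N0); apply: (le_trans cNQ); apply: le_trans QN.
by rewrite real_ler_norm // ger0_real.
Qed.

End Part0.
Import Part0.

Module Part1.
Local Open Scope ring_scope.

Local Open Scope nat_scope.
Local Open Scope ring_scope.
Lemma natr_or (a b : bool) : ~~ (a && b) -> (a || b)%:R = a%:R + b%:R :> algC.
Proof. by case: a; case: b => //= _; rewrite ?addr0 ?add0r. Qed.

Lemma S_int n lo hi (f : nat -> algC) : (lo <= hi <= n)%N ->
  \sum_(0 <= j < n) (lo <= j < hi)%:R * f j = \sum_(lo <= j < hi) f j.
Proof.
move=> /andP [lh hn].
rewrite (big_cat_nat _ (n:=lo)) //= ?(leq_trans lh hn) //.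
rewrite (big_cat_nat _ (m:=lo) (n:=hi)) //=.
rewrite big1_seq ?add0r; last first.
  move=> j /andP [_]; rewrite mem_index_iota => /andP [_ jl].
  by rewrite leqNgt jl /= mul0r.
rewrite [X in _ + X]big1_seq ?addr0; last first.
  move=> j /andP [_]; rewrite mem_index_iota => /andP [hj _].
  by rewrite (_ : (j < hi)%N = false) ?andbF ?mul0r //; apply/negbTE; rewrite -leqNgt.
apply: eq_big_nat => j /andP [lj jh]; by rewrite lj jh mul1r.
Qed.

Lemma S_pt n p (f : nat -> algC) : (p < n)%N ->
  \sum_(0 <= j < n) (j == p)%:R * f j = f p.
Proof.
move=> pn; rewrite (big_cat_nat _ (n:=p)) //= ?(ltnW pn) //.
rewrite big1_seq ?add0r; last first.
  move=> j /andP [_]; rewrite mem_index_iota => /andP [_ jl].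
  by rewrite (ltn_eqF jl) mul0r.
rewrite big_ltn // eqxx mul1r big1_seq ?addr0 //.
move=> j /andP [_]; rewrite mem_index_iota => /andP [jl _].
by rewrite (gtn_eqF jl) mul0r.
Qed.

Lemma S_const lo hi (f : nat -> algC) c : (forall j, (lo <= j < hi)%N -> f j = c) ->
  \sum_(lo <= j < hi) f j = (hi - lo)%:R * c.
Proof.
move=> H; rewrite (eq_big_nat _ _ H) sumr_const_nat mulr_natl //.
Qed.

Local Open Scope nat_scope.
Definition incN (n s v : nat) : bool := (v == 0) || (n - 2 * s <= v).
Definition cpN (n s v : nat) : nat := if v == 0 then 0 else (v - (n - 2 * s)).+1.
Definition En (n s u v : nat) : bool :=
  let m := n - 2 * s in
  [&& u < m, v < m & ((u < m./2) != (v < m./2))]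
  || [&& incN n s u, incN n s v &
        (((cpN n s u).+1 %% (2 * s).+1 == cpN n s v)
         || ((cpN n s v).+1 %% (2 * s).+1 == cpN n s u))].

Lemma CT_En n s (u v : 'I_n) : CT_edge n s u v = En n s u v.
Proof. by []. Qed.

Lemma En_sym n s u v : En n s u v = En n s v u.
Proof.
rewrite /En; congr orb; first by lia.
by rewrite andbCA orbC.
Qed.

Lemma modS p s : p <= 2 * s -> p.+1 %% (2*s).+1 = if p == 2 * s then 0 else p.+1.
Proof. move=> H. case: eqP => E. by rewrite E modnn. rewrite modn_small //. lia. Qed.

Definition adjc s p q := [|| p.+1 == q, q.+1 == p, (p == 2 * s) && (q == 0) | (q == 2 * s) && (p == 0)].

Lemma En_alt n s u v : u < n -> v < n ->
  En n s u v = [&& u < n - 2 * s, v < n - 2 * s & ((u < (n - 2 * s)./2) != (v < (n - 2 * s)./2))]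
  || [&& incN n s u, incN n s v & adjc s (cpN n s u) (cpN n s v)].
Proof.
move=> un vn; rewrite /En; congr orb.
case iu: (incN n s u) => //; case iv: (incN n s v) => //=.
have hu : cpN n s u <= 2 * s by move: iu; rewrite /incN /cpN; case: ifP => //; lia.
have hv : cpN n s v <= 2 * s by move: iv; rewrite /incN /cpN; case: ifP => //; lia.
rewrite !modS // /adjc.
case: ifP; case: ifP; lia.
Qed.

Ltac solve_char := move=> *; rewrite En_alt; [rewrite /incN /cpN /adjc /=; repeat (case: ifP => ?); lia | lia | lia].

Section Chars.
Variables n s : nat.
Hypothesis s1 : 1 <= s.
Hypothesis ns : 2 * s + 2 <= n.
Let m := n - 2 * s.
Let h := m./2.

Lemma char0 j : j < n -> En n s 0 j = (h <= j < m) || (j == m) || (j == n.-1).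
Proof. rewrite /h /m; solve_char. Qed.
Lemma charA i j : 0 < i < h -> j < n -> En n s i j = (h <= j < m).
Proof. rewrite /h /m; solve_char. Qed.
Lemma charB i j : h <= i < m -> j < n -> En n s i j = (j < h).
Proof. rewrite /h /m; solve_char. Qed.
Lemma charM j : j < n -> En n s m j = (j == 0) || (j == m.+1).
Proof. rewrite /h /m; solve_char. Qed.
Lemma charL' i j : i.+1 = n -> j < n -> En n s i j = (j.+2 == n) || (j == 0).
Proof. rewrite /h /m; solve_char. Qed.
Lemma charC' i j : m < i -> i.+2 <= n -> j < n -> En n s i j = (j.+1 == i) || (j == i.+1).
Proof. rewrite /h /m; solve_char. Qed.
Lemma charL j : j < n -> En n s n.-1 j = (j == n.-2) || (j == 0).
Proof.
move=> jn; rewrite charL'; [|lia|done].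
by have -> : (j.+2 == n) = (j == n.-2) by lia.
Qed.
Lemma charC i j : m < i < n.-1 -> j < n -> En n s i j = (j == i.-1) || (j == i.+1).
Proof.
move=> /andP [mi il] jn; rewrite charC' //; last by lia.
by have -> : (j.+1 == i) = (j == i.-1) by rewrite /m in mi; lia.
Qed.

Definition RS (i : nat) (f : nat -> algC) : algC := (\sum_(0 <= j < n) (En n s i j)%:R * f j)%R.

Lemma R0 f : RS 0 f = (\sum_(h <= j < m) f j + f m + f n.-1)%R.
Proof.
rewrite /RS (eq_big_nat _ _ (F2 := fun j => ((h <= j < m)%:R * f j + (j == m)%:R * f j + (j == n.-1)%:R * f j)%R)).
  rewrite !big_split /= S_int ?S_pt //; rewrite /h /m; lia.
move=> j /andP[_ jn]; rewrite char0 // natr_or; last by rewrite /h /m; lia.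
by rewrite natr_or ?mulrDl //; rewrite /h /m; lia.
Qed.

Lemma RA i f : 0 < i < h -> RS i f = (\sum_(h <= j < m) f j)%R.
Proof.
move=> hi; rewrite /RS (eq_big_nat _ _ (F2 := fun j => ((h <= j < m)%:R * f j)%R)).
  rewrite S_int //; rewrite /h /m; lia.
by move=> j /andP[_ jn]; rewrite charA.
Qed.

Lemma RB i f : h <= i < m -> RS i f = (\sum_(0 <= j < h) f j)%R.
Proof.
move=> hi; rewrite /RS (eq_big_nat _ _ (F2 := fun j => ((0 <= j < h)%:R * f j)%R)).
  rewrite S_int //; rewrite /h /m; lia.
by move=> j /andP[_ jn]; rewrite charB.
Qed.

Lemma RM f : RS m f = (f 0 + f m.+1)%R.
Proof.
rewrite /RS (eq_big_nat _ _ (F2 := fun j => ((j == 0)%:R * f j + (j == m.+1)%:R * f j)%R)).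
  rewrite !big_split /= !S_pt //; rewrite /h /m; lia.
move=> j /andP[_ jn]; rewrite charM // natr_or ?mulrDl //; rewrite /h /m; lia.
Qed.

Lemma RL f : RS n.-1 f = (f n.-2 + f 0)%R.
Proof.
rewrite /RS (eq_big_nat _ _ (F2 := fun j => ((j == n.-2)%:R * f j + (j == 0)%:R * f j)%R)).
  rewrite !big_split /= !S_pt //; rewrite /h /m; lia.
move=> j /andP[_ jn]; rewrite charL // natr_or ?mulrDl //; rewrite /h /m; lia.
Qed.

Lemma RC i f : m < i < n.-1 -> RS i f = (f i.-1 + f i.+1)%R.
Proof.
move=> hi; rewrite /RS (eq_big_nat _ _ (F2 := fun j => ((j == i.-1)%:R * f j + (j == i.+1)%:R * f j)%R)).
  rewrite !big_split /= !S_pt //; rewrite /h /m; lia.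
move=> j /andP[_ jn]; rewrite charC // natr_or ?mulrDl //; rewrite /h /m; lia.
Qed.

End Chars.

End Part1.
Import Part1.

Module Part2.
Local Open Scope ring_scope.

Section Struct.
Variables n s : nat.
Hypothesis s1 : (1 <= s)%N.
Hypothesis ns : (2 * s + 2 <= n)%N.
Let m := (n - 2 * s)%N.
Let h := (m./2)%N.

Lemma rowsum_RS (f : nat -> algC) (i : 'I_n) :
  \sum_j (CT_edge n s i j)%:R * f j = RS n s i f.
Proof. by rewrite /RS big_mkord; apply: eq_bigr => j _; rewrite CT_En. Qed.

Lemma classify (P : nat -> Prop) : P 0%N -> (forall i, (0 < i < h)%N -> P i) ->
  (forall i, (h <= i < m)%N -> P i) -> P m -> P n.-1 ->
  (forall i, (m < i < n.-1)%N -> P i) -> forall i, (i < n)%N -> P i.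
Proof.
move=> H0 HA HB HM HL HC i iN.
have [->|i0] := eqVneq i 0%N => //.
have [ih|hi] := ltnP i h; first by apply: HA; lia.
have [im|mi] := ltnP i m; first by apply: HB; lia.
have [->|im] := eqVneq i m => //.
have [->|il] := eqVneq i n.-1 => //.
apply: HC; rewrite /h /m in hi mi im il *; lia.
Qed.

Definition fU (q p r e : algC) (j : nat) : algC :=
  if j == 0%N then q else if (j < h)%N then p else if (j < m)%N then r else e.

Ltac fcase := repeat (case: ifP => ?); first [reflexivity | exfalso; lia | exfalso; rewrite /h /m in *; lia | exfalso; subst h m; lia].
Goal forall j : nat, (0 < j < h)%N -> j == 0%N -> False. move=> j H1 H2. lia. Qed.

Lemma fU0 q p r e : fU q p r e 0 = q. Proof. by []. Qed.
Lemma fUA q p r e j : (0 < j < h)%N -> fU q p r e j = p. Proof. move=> ?; rewrite /fU; fcase. Qed.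
Lemma fUB q p r e j : (h <= j < m)%N -> fU q p r e j = r. Proof. move=> ?; rewrite /fU; fcase. Qed.
Lemma fUC q p r e j : (m <= j)%N -> fU q p r e j = e. Proof. move=> ?; rewrite /fU; fcase. Qed.

Lemma sumB (f : nat -> algC) r : (forall j, (h <= j < m)%N -> f j = r) ->
  \sum_(h <= j < m) f j = (m - h)%:R * r.
Proof. exact: S_const. Qed.

Lemma sumA (f : nat -> algC) p : (forall j, (0 < j < h)%N -> f j = p) ->
  \sum_(0 <= j < h) f j = f 0%N + (h.-1)%:R * p.
Proof.
move=> H; rewrite big_ltn; last by rewrite /h /m; lia.
by rewrite (S_const _ _ _ p) ?subn1 // => j hj; apply: H; lia.
Qed.

Lemma upper_G c q p r e :
  0 < q -> 0 < p -> 0 < r -> 0 < e ->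
  (m - h)%:R * r + e + e < c * q ->
  (m - h)%:R * r < c * p ->
  q + (h.-1)%:R * p < c * r ->
  q + e < c * e ->
  e + e < c * e ->
  lambda (CT_edge n s) < c.
Proof.
move=> q0 p0 r0 e0 H0 HA HB HM HC.
have c0 : 0 < c by have := lt_trans (addr_gt0 e0 e0) HC; rewrite pmulr_lgt0.
rewrite /lambda; apply: (lt_srad _ _ _ c0).
apply: (@upper_bound n (CT_edge n s) (fun j : 'I_n => fU q p r e j) c).
- by move=> i j; rewrite !CT_En En_sym.
- by move=> i; rewrite /fU; repeat case: ifP => _.
move=> [i iN]; rewrite rowsum_RS /=; move: i iN; apply: classify.
- rewrite R0 // fU0 (sumB _ r) ?fUC //; first by rewrite /m; lia.
  by move=> j hj; apply: fUB.
- move=> i hi; rewrite RA // (fUA _ _ _ _ _ hi) (sumB _ r) //.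
  by move=> j hj; apply: fUB.
- move=> i hi; rewrite RB // (fUB _ _ _ _ _ hi) (sumA _ p) //.
  by move=> j hj; apply: fUA.
- rewrite RM // fU0 !fUC //; lia.
- have h1 : (m <= n.-2)%N by rewrite /m; lia.
  have h2 : (m <= n.-1)%N by rewrite /m; lia.
  by rewrite RL // fU0 !fUC // addrC.
- move=> i hi; have h1 : (m <= i.-1)%N by rewrite /m in hi *; lia.
  have h2 : (m <= i.+1)%N by rewrite /m in hi *; lia.
  have h3 : (m <= i)%N by rewrite /m in hi *; lia.
  by rewrite RC // !fUC.
Qed.

Definition fL (a u w d : algC) (j : nat) : algC :=
  if j == 0%N then a else if (j < h)%N then u else if (j < m)%N then w
  else if (j == m) || (j == n.-1) then d else 0.

Lemma fL0 a u w d : fL a u w d 0 = a. Proof. by []. Qed.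
Lemma fLA a u w d j : (0 < j < h)%N -> fL a u w d j = u. Proof. move=> ?; rewrite /fL; fcase. Qed.
Lemma fLB a u w d j : (h <= j < m)%N -> fL a u w d j = w. Proof. move=> ?; rewrite /fL; fcase. Qed.
Lemma fLM a u w d : fL a u w d m = d. Proof. rewrite /fL; fcase. Qed.
Lemma fLL a u w d : fL a u w d n.-1 = d. Proof. rewrite /fL; fcase. Qed.
Lemma fLC a u w d j : (m < j < n.-1)%N -> fL a u w d j = 0. Proof. move=> ?; rewrite /fL; fcase. Qed.

Lemma lower_G c a u w d :
  0 <= c -> 0 < a -> 0 <= u -> 0 <= w -> 0 <= d ->
  c * a <= (m - h)%:R * w + d + d ->
  c * u <= (m - h)%:R * w ->
  c * w <= a + (h.-1)%:R * u ->
  c * d <= a ->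
  c <= lambda (CT_edge n s).
Proof.
move=> c0 a0 u0 w0 d0 H0 HA HB HM.
have fpos : forall j, 0 <= fL a u w d j.
  by move=> j; rewrite /fL; repeat case: ifP => _ //; apply: ltW.
have n0 : (0 < n)%N by apply: leq_trans ns; rewrite addn2.
rewrite /lambda; apply: (@lower_bound n (CT_edge n s) (fun j : 'I_n => fL a u w d j) c) => //.
- by move=> i j; rewrite !CT_En En_sym.
- by exists (Ordinal n0).
move=> [i iN]; rewrite rowsum_RS /=; move: i iN; apply: classify.
- rewrite R0 // (sumB _ w); last by move=> j hj; apply: fLB.
  by rewrite fLM fLL.
- move=> i hi; rewrite RA // (sumB _ w); last by move=> j hj; apply: fLB.
  by rewrite (fLA _ _ _ _ _ hi).
- move=> i hi; rewrite RB // (sumA _ u); last by move=> j hj; apply: fLA.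
  by rewrite (fLB _ _ _ _ _ hi).
- rewrite RM // fLM.
  by apply: (le_trans HM); rewrite lerDl.
- rewrite RL // fLL.
  by apply: (le_trans HM); rewrite lerDr.
- move=> i hi; rewrite RC // (fLC _ _ _ _ _ hi).
  by rewrite mulr0 addr_ge0.
Qed.

End Struct.

End Part2.
Import Part2.

Module Part3.
Local Open Scope ring_scope.

Lemma Tlt (x y : rat) : x < y -> ratr x < ratr y :> algC.
Proof. by rewrite ltr_rat. Qed.
Lemma Tle (x y : rat) : x <= y -> ratr x <= ratr y :> algC.
Proof. by rewrite ler_rat. Qed.

Lemma upper_Q n s (a1 b : nat) (c q p r e : rat) :
  (1 <= s)%N -> (2 * s + 2 <= n)%N ->
  ((n - 2 * s)./2).-1 = a1 -> (n - 2 * s - (n - 2 * s)./2)%N = b ->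
  0 < q -> 0 < p -> 0 < r -> 0 < e ->
  b%:R * r + e + e < c * q ->
  b%:R * r < c * p ->
  q + a1%:R * p < c * r ->
  q + e < c * e ->
  e + e < c * e ->
  lambda (CT_edge n s) < ratr c.
Proof.
move=> s1 ns E1 E2 q0 p0 r0 e0 H1 H2 H3 H4 H5.
apply: (@upper_G n s s1 ns (ratr c) (ratr q) (ratr p) (ratr r) (ratr e)).
- by rewrite ltr0q.
- by rewrite ltr0q.
- by rewrite ltr0q.
- by rewrite ltr0q.
- by move: (Tlt _ _ H1); rewrite !rmorphD !rmorphM /= ratr_nat E2.
- by move: (Tlt _ _ H2); rewrite !rmorphM /= ratr_nat E2.
- by move: (Tlt _ _ H3); rewrite !rmorphD !rmorphM /= ratr_nat E1.
- by move: (Tlt _ _ H4); rewrite !rmorphD !rmorphM.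
- by move: (Tlt _ _ H5); rewrite !rmorphD !rmorphM.
Qed.

Lemma lower_Q n s (a1 b : nat) (c a u w d : rat) :
  (1 <= s)%N -> (2 * s + 2 <= n)%N ->
  ((n - 2 * s)./2).-1 = a1 -> (n - 2 * s - (n - 2 * s)./2)%N = b ->
  0 <= c -> 0 < a -> 0 <= u -> 0 <= w -> 0 <= d ->
  c * a <= b%:R * w + d + d ->
  c * u <= b%:R * w ->
  c * w <= a + a1%:R * u ->
  c * d <= a ->
  ratr c <= lambda (CT_edge n s).
Proof.
move=> s1 ns E1 E2 c0 a0 u0 w0 d0 H1 H2 H3 H4.
apply: (@lower_G n s s1 ns (ratr c) (ratr a) (ratr u) (ratr w) (ratr d)).
- by rewrite ler0q.
- by rewrite ltr0q.
- by rewrite ler0q.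
- by rewrite ler0q.
- by rewrite ler0q.
- by move: (Tle _ _ H1); rewrite !rmorphD !rmorphM /= ratr_nat E2.
- by move: (Tle _ _ H2); rewrite !rmorphM /= ratr_nat E2.
- by move: (Tle _ _ H3); rewrite !rmorphD !rmorphM /= ratr_nat E1.
- by move: (Tle _ _ H4); rewrite !rmorphM.
Qed.

End Part3.
Import Part3.

Module Part4.
Local Open Scope ring_scope.

Lemma step n s : (1 <= s)%N -> (2 * s + 4 <= n)%N ->
  lambda (CT_edge n s.+1) < lambda (CT_edge n s).
Proof.
move=> s1 ns.
have s1' : (1 <= s.+1)%N by [].
have ns' : (2 * s.+1 + 2 <= n)%N by lia.
have ns0 : (2 * s + 2 <= n)%N by lia.
have [k [Hk|Hk]] : exists k, (n - 2 * s = k.*2 + 4 \/ n - 2 * s = k.*2 + 5)%N.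
  by exists ((n - 2 * s - 4)./2); lia.
- case: k Hk => [|k] Hk.
  + apply: (@lt_le_trans _ _ (ratr (11/5 : rat))).
      apply: (@upper_Q n s.+1 0 1 (11/5) 66 15 31 56 s1' ns'); [lia | lia | lra ..].
    apply: (@lower_Q n s 1 2 (11/5) 71 50 55 32 s1 ns0); [lia | lia | lra ..].
  + have k0 : 0 <= k%:R :> rat := ler0n _ _.
    apply: (@lt_le_trans _ _ (ratr (k%:R + 3 : rat))).
      apply: (@upper_Q n s.+1 (k + 1) (k + 2) (k%:R + 3) 3 2 2 2 s1' ns');
        [lia | lia | rewrite ?natrD; lra ..].
    apply: (@lower_Q n s (k + 2) (k + 3) (k%:R + 3) (k%:R + 3) (k%:R + 3) (k%:R + 3) 0 s1 ns0);
      [lia | lia | rewrite ?natrD; nra ..].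
- case: k Hk => [|k] Hk.
  + apply: (@lt_le_trans _ _ (ratr (12/5 : rat))).
      apply: (@upper_Q n s.+1 0 2 (12/5) 100 40 45 72 s1' ns'); [lia | lia | lra ..].
    apply: (@lower_Q n s 1 3 (12/5) (12/5) (12/5) 2 0 s1 ns0); [lia | lia | lra ..].
  + have k0 : 0 <= k%:R :> rat := ler0n _ _.
    apply: (@lt_le_trans _ _ (ratr (k%:R + 10/3 : rat))).
      apply: (@upper_Q n s.+1 (k + 1) (k + 3) (k%:R + 10/3) 2 1 1 1 s1' ns');
        [lia | lia | rewrite ?natrD; lra ..].
    apply: (@lower_Q n s (k + 2) (k + 4) (k%:R + 10/3) (k%:R + 10/3) (k%:R + 10/3) (k%:R + 3) 0 s1 ns0);
      [lia | lia | rewrite ?natrD; nra ..].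
Qed.


End Part4.
Import Part4.

Theorem lemma3p5 (l t n : nat) :
  (0 < l)%N -> (l < t)%N -> (2 * t + 2 <= n)%N ->
  lambda (CT_edge n t) < lambda (CT_edge n l).
Proof.
move=> l0; elim: t => [//|t IH] lt tn.
have [->|ne] := eqVneq l t; first by apply: step; lia.
have st : lambda (CT_edge n t.+1) < lambda (CT_edge n t) by apply: step; lia.
apply: (lt_trans st); apply: IH; lia.
Qed.
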